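(* Let $Q$ be a finite quiver, let $A=\Bbbk Q/(\geq 2)$, let $J$ be the ideal of $A$ generated by all loops of $Q$, let $Q'$ be the quiver obtained from $Q$ by deleting all loops, let $C=\Bbbk Q'$ and $B=A/J\cong C/(\geq 2)$. Then there is a one-to-one correspondence between isomorphism classes $$\{\text{brick } A\text{-modules}\}\longleftrightarrow\{\text{brick } C\text{-modules annihilated by the ideal } (\geq 2) \text{ of } C\}.$$ More precisely, every brick $A$-module is annihilated by $J$ (hence is a $B$-module, hence a $C$-module annihilated by $(\geq 2)$), and conversely; and for brick $A$-modules $M,N$ there are natural isomorphisms $$\mathrm{Hom}_A(M,N)\cong \mathrm{Hom}_B(M,N)\cong \mathrm{Hom}_C(M,N).$$
   Context: $\Bbbk$ is an algebraically closed field. For a finite quiver $Q$, the path algebra $\Bbbk Q$ is generated by vertex idempotents $e_i$ and arrows $\alpha$ with $e_ie_j=\delta_{ij}e_i$, $e_i\alpha=\delta_{i,t(\alpha)}\alpha$, $\alpha e_j=\delta_{j,s(\alpha)}\alpha$ (so finite-dimensional left modules are representations of $Q$); $(\geq 2)$ denotes the ideal generated by all paths of length at least $2$. Modules are finite-dimensional left modules. A module $M$ is a brick if $\mathrm{End}(M)=\Bbbk$. A module over a quotient $R/I$ is identified with an $R$-module annihilated by $I$. *)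

(* Defs.v *)
From HB Require Import structures.
From mathcomp Require Import all_boot all_order all_algebra.
Set Implicit Arguments. Unset Strict Implicit. Unset Printing Implicit Defensive.
Import GRing.Theory.
Local Open Scope ring_scope.

(* A finite-dimensional left module over kQ is a representation: a vector space
   K^(rdim v) at each vertex, and for each arrow a a linear map
   K^(rdim (s a)) -> K^(rdim (t a)), encoded as a matrix acting on ROW vectors
   (v |-> v *m rmat a).  The path  b.a  (first a then b) acts as rmat a *m rmat b. *)
Record rep (K : fieldType) (V Ar : Type) (s t : Ar -> V) := Rep {
  rdim : V -> nat;
  rmat : forall a : Ar, 'M[K]_(rdim (s a), rdim (t a))
}.
Arguments Rep {K V Ar s t}.

Section Reps.
Variables (K : fieldType) (V : eqType) (Ar : Type) (s t : Ar -> V).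

Definition is_hom (M N : rep K s t) (f : forall v, 'M[K]_(rdim M v, rdim N v)) :=
  forall a, rmat M a *m f (t a) = f (s a) *m rmat N a.

Definition is_iso (M N : rep K s t) :=
  exists (f : forall v, 'M[K]_(rdim M v, rdim N v))
         (g : forall v, 'M[K]_(rdim N v, rdim M v)),
    [/\ is_hom f, is_hom g, (forall v, f v *m g v = 1%:M)
      & (forall v, g v *m f v = 1%:M)].

(* End(M) = k : the natural map k -> End(M) is bijective, i.e. M <> 0
   (injectivity) and every endomorphism is a scalar (surjectivity). *)
Definition brick (M : rep K s t) :=
  (exists v, rdim M v != 0%N) /\
  forall f : forall v, 'M[K]_(rdim M v, rdim M v),
    is_hom f -> exists c : K, forall v, f v = c%:M.

(* annihilated by the ideal (>= 2): every path of length 2 acts as zero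
   (hence all longer paths too). *)
Definition rad2 (M : rep K s t) :=
  forall a b (H : t a = s b),
    castmx (erefl, congr1 (rdim M) H) (rmat M a) *m rmat M b = 0.

Definition loops_zero (M : rep K s t) :=
  forall a, s a = t a -> rmat M a = 0.

Definition Ar' := {a : Ar | s a != t a}.
Definition s' (a : Ar') : V := s (val a).
Definition t' (a : Ar') : V := t (val a).

Definition restrict (M : rep K s t) : rep K s' t' :=
  Rep (rdim M) (fun a => rmat M (val a)).

Definition extend (N : rep K s' t') : rep K s t :=
  Rep (rdim N) (fun a =>
    match s a != t a as b
      return (s a != t a) = b -> 'M[K]_(rdim N (s a), rdim N (t a)) with
    | true => fun H => rmat N (exist _ a H)
    | false => fun _ => 0
    end erefl).

End Reps.
Arguments Ar' {V Ar} s t.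
Arguments s' {V Ar} s t a.
Arguments t' {V Ar} s t a.

(* Main.v *)
Require Import Defs.
From HB Require Import structures.
From mathcomp Require Import all_boot all_order all_algebra.
Local Open Scope ring_scope.
Import GRing.Theory.
Section S.
Local Set Implicit Arguments.
Variables (K : fieldType) (V : eqType) (Ar : Type) (s t : Ar -> V).

Lemma extend_rmat (N : rep K (s' s t) (t' s t)) a (Hb : s a != t a) :
  rmat (extend N) a = rmat N (exist _ a Hb).
Proof.
rewrite /extend /=.
refine (match s a != t a as b return forall e : (s a != t a) = b, (if b as b0 return ((s a != t a) = b0 -> 'M[K]_(rdim N (s a), rdim N (t a)))
    then fun H => rmat N (exist _ a H) else fun _ => 0) e = rmat N (exist _ a Hb) with true => _ | false => _ end erefl).
- move=> e; by rewrite (bool_irrelevance e Hb).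
- move=> e; have := Hb; by rewrite e.
Qed.

Lemma extend_loop (N : rep K (s' s t) (t' s t)) a (Hl : s a = t a) :
  rmat (extend N) a = 0.
Proof.
rewrite /extend /=.
refine (match s a != t a as b return forall e : (s a != t a) = b, (if b as b0 return ((s a != t a) = b0 -> 'M[K]_(rdim N (s a), rdim N (t a)))
    then fun H => rmat N (exist _ a H) else fun _ => 0) e = 0 with true => _ | false => _ end erefl).
- move=> e; exfalso; move: e; by rewrite Hl eqxx.
- by [].
Qed.

Lemma castmx0 m n m' n' (e : (m = m') * (n = n')) : castmx e (0 : 'M[K]_(m,n)) = 0.
Proof. case: e => e1 e2; subst; by rewrite castmx_id. Qed.

Lemma conform_eq m n m' n' (B : 'M[K]_(m',n')) (A : 'M[K]_(m,n)) (e1 : m = m') (e2 : n = n') :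
  conform_mx B A = castmx (e1, e2) A.
Proof. subst; by rewrite conform_mx_id castmx_id. Qed.

Lemma zero_prod_r m n n' p p' (A : 'M[K]_(m,n)) (B : 'M[K]_(n',p')) (e : n = n') :
  castmx (erefl, e) A *m B = 0 -> forall (e1 : n' = n) (e2 : p' = p), A *m castmx (e1,e2) B = 0.
Proof.
subst; rewrite castmx_id => h e1 e2; subst.
by rewrite (eq_irrelevance e1 erefl) castmx_id.
Qed.

Lemma zero_prod_l m m' n n' p (A : 'M[K]_(m',n')) (B : 'M[K]_(n,p)) (e : n' = n) :
  castmx (erefl, e) A *m B = 0 -> forall (e1 : m' = m) (e2 : n' = n), castmx (e1,e2) A *m B = 0.
Proof.
subst; rewrite castmx_id => h e1 e2; subst.
by rewrite (eq_irrelevance e2 erefl) castmx_id.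
Qed.

Lemma conform_zero_r m n n' p p' (A : 'M[K]_(m,n)) (B : 'M[K]_(n',p')) (C : 'M[K]_(n,p)) (e : n = n') :
  castmx (erefl, e) A *m B = 0 -> n' = n -> p' = p -> A *m conform_mx C B = 0.
Proof. move=> h e1 e2; rewrite (conform_eq _ _ e1 e2). exact: (@zero_prod_r _ _ _ _ _ A B e h). Qed.

Lemma conform_zero_l m m' n n' p (A : 'M[K]_(m',n')) (B : 'M[K]_(n,p)) (C : 'M[K]_(m,n)) (e : n' = n) :
  castmx (erefl, e) A *m B = 0 -> m' = m -> n' = n -> conform_mx C A *m B = 0.
Proof. move=> h e1 e2; rewrite (conform_eq _ _ e1 e2). exact: (@zero_prod_l _ _ _ _ _ A B e h). Qed.

Lemma sq_scalar n (X : 'M[K]_n) c : X = c%:M -> X *m X = 0 -> X = 0.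
Proof.
case: n X => [|n] X; first by rewrite flatmx0.
move=> -> /matrixP /(_ 0 0); rewrite -scalar_mxM !mxE eqxx mulr1n => /eqP.
by rewrite mulf_eq0 orbb => /eqP ->; rewrite raddf0.
Qed.

Lemma loop_lemma m n (A : 'M[K]_(m,n)) (e : n = m) (c : K) :
  conform_mx (0 : 'M_(m,m)) A = c%:M -> castmx (erefl, e) A *m A = 0 -> A = 0.
Proof.
subst; rewrite conform_mx_id castmx_id; exact: sq_scalar.
Qed.

Lemma brick_loops (M : rep K s t) : rad2 M -> brick M -> loops_zero M.
Proof.
move=> r [_ b] a Hl.
pose f := fun w => if w == s a then conform_mx (0 : 'M[K]_(rdim M w, rdim M w)) (rmat M a) else 0.
have hf : is_hom f.
  move=> c; rewrite /f.
  have Z1 : t c = s a -> rmat M c *m conform_mx (0 : 'M[K]_(rdim M (t c), rdim M (t c))) (rmat M a) = 0.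
    move=> Htc; apply: (@conform_zero_r _ _ _ _ _ _ _ _ _ (r c a Htc)); by rewrite /= ?Htc // ?Hl.
  have Z2 : s c = s a -> conform_mx (0 : 'M[K]_(rdim M (s c), rdim M (s c))) (rmat M a) *m rmat M c = 0.
    move=> Hsc; have Hts : t a = s c by rewrite -Hl Hsc.
    apply: (@conform_zero_l _ _ _ _ _ _ _ _ _ (r a c Hts)); by rewrite -?Hl -?Hsc.
  case: (eqVneq (t c) (s a)) => Htc; case: (eqVneq (s c) (s a)) => Hsc;
    rewrite ?mulmx0 ?mul0mx ?Z1 ?Z2 //.
have [c Hc] := b f hf.
have Hv := Hc (s a); rewrite /f eqxx in Hv.
exact: (loop_lemma _ Hv (r a a (esym Hl))).
Qed.

Lemma hom_restrict (M N : rep K s t) (f : forall v, 'M[K]_(rdim M v, rdim N v)) :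
  loops_zero M -> loops_zero N ->
  is_hom f <-> is_hom (M := restrict M) (N := restrict N) f.
Proof.
move=> lM lN; split=> h a; first exact: h.
case: (eqVneq (s a) (t a)) => Hl.
  by rewrite lM // lN // mulmx0 mul0mx.
exact: (h (exist _ a Hl)).
Qed.

End S.

Theorem theorem1p2 (K : closedFieldType) (V Ar : finType) (s t : Ar -> V) :
  (* every brick A-module (A = kQ/(>=2)) is annihilated by J *)
  (forall M : rep K s t, rad2 M -> brick M -> loops_zero M) /\
  (* brick A-modules give brick C-modules annihilated by (>=2) *)
  (forall M : rep K s t, rad2 M -> brick M ->
     rad2 (restrict M) /\ brick (restrict M)) /\
  (* conversely, brick C-modules annihilated by (>=2) give brick A-modules
     annihilated by J *)
  (forall N : rep K (s' s t) (t' s t), rad2 N -> brick N ->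
     [/\ rad2 (extend N), brick (extend N) & loops_zero (extend N)]) /\
  (* the two constructions are mutually inverse up to isomorphism *)
  (forall M : rep K s t, loops_zero M -> is_iso (extend (restrict M)) M) /\
  (forall N : rep K (s' s t) (t' s t), is_iso (restrict (extend N)) N) /\
  (* Hom_A(M,N) = Hom_B(M,N) = Hom_C(M,N) for brick A-modules M, N
     (the natural map being the identity on vertex-wise linear maps) *)
  (forall M N : rep K s t, rad2 M -> brick M -> rad2 N -> brick N ->
     forall f : forall v, 'M[K]_(rdim M v, rdim N v),
       is_hom f <-> is_hom (M := restrict M) (N := restrict N) f).
Proof.
split; first by move=> M; exact: brick_loops.
split.
  move=> M r bM; have lM := brick_loops r bM.
  split; first by move=> a b H; exact: (r (val a) (val b) H).
  case: bM => nz hb; split; first exact: nz.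
  move=> f hf; apply: hb; apply/(hom_restrict _ lM lM). exact: hf.
split.
  move=> N r [nz hb]; split.
  - move=> a b H.
    case: (eqVneq (s a) (t a)) => Ha.
      by rewrite (extend_loop N a Ha) castmx0 mul0mx.
    case: (eqVneq (s b) (t b)) => Hb.
      by rewrite (extend_loop N b Hb) mulmx0.
    rewrite (extend_rmat N a Ha) (extend_rmat N b Hb).
    exact: (r (exist _ a Ha) (exist _ b Hb) H).
  - split; first exact: nz.
    move=> f hf; apply: hb => [[a Ha]].
    have := hf a; by rewrite (extend_rmat N a Ha).
  - by move=> a Ha; exact: extend_loop.
split.
  move=> M lM; exists (fun v => 1%:M), (fun v => 1%:M).
  split=> [a|a|v|v]; rewrite ?mulmx1 ?mul1mx //.
  - case: (eqVneq (s a) (t a)) => Ha.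
      by rewrite (extend_loop (restrict M) a Ha) lM.
    by rewrite (extend_rmat (restrict M) a Ha).
  - case: (eqVneq (s a) (t a)) => Ha.
      by rewrite (extend_loop (restrict M) a Ha) lM.
    by rewrite (extend_rmat (restrict M) a Ha).
split.
  move=> N; exists (fun v => 1%:M), (fun v => 1%:M).
  split=> [[a Ha]|[a Ha]|v|v]; rewrite ?mulmx1 ?mul1mx //; [exact: (extend_rmat N a Ha)|exact: (esym (extend_rmat N a Ha))].
move=> M N rM bM rN bN f.
exact: (hom_restrict f (brick_loops rM bM) (brick_loops rN bN)).
Qed.
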